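(* For $(\alpha,\beta)\in\mathbb{R}^2$, let $\mathfrak{m}_{\alpha,\beta}$ be the $8$-dimensional real Lie algebra with a basis $\{v^1,\dots,v^8\}$ of its dual satisfying $$dv^1=dv^2=dv^3=0,\quad dv^4=v^{13},\quad dv^5=v^{23},\quad dv^6=v^{14}+v^{25}-v^{35},$$ $$dv^7=\alpha v^{12}+v^{15}+v^{24}+v^{34},\quad dv^8=v^{16}-2\beta v^{25}+v^{27}-\beta v^{35}-v^{45},$$ and let $\{v'^1,\dots,v'^8\}$ be the analogous basis of $\mathfrak{m}_{\alpha',\beta'}^*$ (same equations with $(\alpha',\beta')$). Let $f:\mathfrak{m}_{\alpha,\beta}\to\mathfrak{m}_{\alpha',\beta'}$ be a Lie algebra isomorphism and $F:\bigwedge^*\mathfrak{m}_{\alpha',\beta'}^*\to\bigwedge^*\mathfrak{m}_{\alpha,\beta}^*$ the extension of its dual, written $F(v'^i)=\sum_{j=1}^8\lambda^i_j v^j$, so that $\Lambda=(\lambda^i_j)\in GL(8,\mathbb{R})$ and $F(dv'^i)=d(F(v'^i))$ for all $i$. Then $F(v'^i)\wedge v^{123}=0$ for $i=1,2,3$; $F(v'^i)\wedge v^{12345}=0$ for $i=4,5$; and $F(v'^i)\wedge v^{1234567}=0$ for $i=6,7$. In particular $\Lambda$ is block triangular and $$\det(\lambda^i_j)_{i,j=1,2,3}\cdot\det(\lambda^i_j)_{i,j=4,5}\cdot\det(\lambda^i_j)_{i,j=6,7}\cdot\lambda^8_8=\det\Lambda\neq0.$$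
   Context: $v^{ij}=v^i\wedge v^j$, $v^{i_1\cdots i_k}=v^{i_1}\wedge\cdots\wedge v^{i_k}$, and $d$ is the Chevalley–Eilenberg differential. *)

(* Defs.v *)
From mathcomp Require Import all_boot all_order all_algebra.
From mathcomp Require Import reals.
Set Implicit Arguments. Unset Strict Implicit. Unset Printing Implicit Defensive.
Import Order.TTheory GRing.Theory Num.Theory.
Local Open Scope ring_scope.

(* Indices 1..8 of the paper are the ordinals 0..7 of 'I_8.
   A 1-form  sum_j a_j v^j  is a row vector a : 'rV_8.
   A 2-form  omega = 1/2 sum_{a,b} W_{ab} v^a /\ v^b  is a skew matrix W : 'M_8;
   thus v^{jk} corresponds to E_{jk} - E_{kj}. *)

(* v^{jk}, with 1-based paper indices j, k *)
Definition vv {R : realType} (j k : nat) : 'M[R]_8 :=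
  delta_mx (inord j.-1) (inord k.-1) - delta_mx (inord k.-1) (inord j.-1).

(* The Chevalley-Eilenberg differential of the basis 1-forms of m_{alpha,beta}^*:
   dm al be i = d v^{i+1} (as a skew matrix). *)
Definition dm {R : realType} (al be : R) (i : 'I_8) : 'M[R]_8 :=
  match val i with
  | 0 | 1 | 2 => 0
  | 3 => vv 1 3
  | 4 => vv 2 3
  | 5 => vv 1 4 + vv 2 5 - vv 3 5
  | 6 => al *: vv 1 2 + vv 1 5 + vv 2 4 + vv 3 4
  | _ => vv 1 6 - (2 * be) *: vv 2 5 + vv 2 7 - be *: vv 3 5 - vv 4 5
  end.

(* F extended to the exterior algebra, applied to the 2-form W' of
   m_{alpha',beta'}^*, where F(v'^i) = sum_j L i j v^j:
   F(1/2 sum W'_{jk} v'^j/\v'^k) has skew matrix L^T W' L. *)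
Definition F2 {R : realType} (L : 'M[R]_8) (W : 'M[R]_8) : 'M[R]_8 :=
  L^T *m W *m L.

Definition F1 {R : realType} (L : 'M[R]_8) (i : 'I_8) : 'rV[R]_8 := row i L.

Definition d1 {R : realType} (al be : R) (a : 'rV[R]_8) : 'M[R]_8 :=
  \sum_(j < 8) a 0 j *: dm al be j.

(* Forms of higher degree: coefficients on increasing multi-indices,
   i.e. functions on subsets S of 'I_8  (v^S = v^{s_1 ... s_k}, s_1<...<s_k). *)
Definition kform (R : realType) := {ffun {set 'I_8} -> R}.

(* wedge of a 1-form a with the basis form v^S:
   v^j /\ v^S = (-1)^{#{s in S | s < j}} v^{S u {j}}  for j notin S. *)
Definition wedge1 {R : realType} (a : 'rV[R]_8) (S : {set 'I_8}) : kform R :=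
  [ffun T => \sum_(j < 8 | (j \notin S) && (T == j |: S))
               (-1) ^+ #|[set s in S | (s < j)%N]| * a 0 j].

(* v^{1...k} as the index set {0,...,k-1} *)
Definition vfirst (k : nat) : {set 'I_8} := [set j : 'I_8 | j < k]%N.

(* Main.v *)
Require Import Defs.
From mathcomp Require Import all_boot all_order all_algebra.
From mathcomp Require Import reals zify.
Import Order.TTheory GRing.Theory Num.Theory.
Local Open Scope ring_scope.

Lemma d1E (R : realType) al be (a : 'rV[R]_8) (r c : 'I_8) :
  d1 al be a r c = \sum_(j < 8) a 0 j * dm al be j r c.
Proof. by rewrite /d1 summxE; apply: eq_bigr => j _; rewrite mxE. Qed.

Ltac d1tac hr hc := move=> hr hc; rewrite d1E !big_ord_recl big_ord0 /dm /= !mxE -!val_eqE /= !inordK // hr hc /=;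
  rewrite ?(mulr0, mulr1, subr0, addr0, add0r, sub0r, subrr, mul0r, mul1r, oppr0);
  congr (_ _ _); by apply/val_inj; rewrite /= inordK.

Lemma d1_a3 (R : realType) al be (a : 'rV[R]_8) (r c : 'I_8) :
  val r = 0%N -> val c = 2%N -> d1 al be a r c = a 0 (inord 3).
Proof. d1tac hr hc. Qed.
Lemma d1_a4 (R : realType) al be (a : 'rV[R]_8) (r c : 'I_8) :
  val r = 1%N -> val c = 2%N -> d1 al be a r c = a 0 (inord 4).
Proof. d1tac hr hc. Qed.
Lemma d1_a5 (R : realType) al be (a : 'rV[R]_8) (r c : 'I_8) :
  val r = 0%N -> val c = 3%N -> d1 al be a r c = a 0 (inord 5).
Proof. d1tac hr hc. Qed.
Lemma d1_a6 (R : realType) al be (a : 'rV[R]_8) (r c : 'I_8) :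
  val r = 0%N -> val c = 4%N -> d1 al be a r c = a 0 (inord 6).
Proof. d1tac hr hc. Qed.
Lemma d1_a7 (R : realType) al be (a : 'rV[R]_8) (r c : 'I_8) :
  val r = 0%N -> val c = 5%N -> d1 al be a r c = a 0 (inord 7).
Proof. d1tac hr hc. Qed.

Lemma F2_0 (R : realType) (L W : 'M[R]_8) (m : nat) (r c : 'I_8) :
  (forall q p : 'I_8, (m <= p)%N -> W q p = 0) ->
  (forall p : 'I_8, (p < m)%N -> L p c = 0) -> F2 L W r c = 0.
Proof.
move=> hW hL; rewrite /F2 mxE; apply: big1 => p _.
case: (ltnP p m) => h; first by rewrite hL // mulr0.
rewrite mxE big1 ?mul0r // => q _; by rewrite hW // mulr0.
Qed.

Lemma dm_col (R : realType) (al be : R) (i : 'I_8) (q p : 'I_8) :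
  (3 <= i < 7)%N -> ((if (i < 5)%N then 3 else 5) <= p)%N -> dm al be i q p = 0.
Proof.
case: i => [[|[|[|[|[|[|[|[|i]]]]]]]] hi] //= _ hp; rewrite /dm /= !mxE -!val_eqE /= !inordK //;
  rewrite !(gtn_eqF (leq_trans _ hp)) //= ?andbF; simpl; rewrite ?(mulr0, subr0, addr0, subrr).
all: by [].
Qed.
Lemma det_lblk (R : realType) m n (A : 'M[R]_(m+n)) :
  ursubmx A = 0 -> \det A = \det (ulsubmx A) * \det (drsubmx A).
Proof. by move=> h; rewrite -{1}(submxK A) h det_lblock. Qed.

Lemma det_block (R : realType) (L : 'M[R]_8) :
  (forall i j : 'I_8, (i < 7)%N ->
          (j >= (if (i < 3)%N then 3 else if (i < 5)%N then 5 else 7))%N -> L i j = 0) ->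
      \det (\matrix_(i < 3, j < 3) L (inord i) (inord j))
      * \det (\matrix_(i < 2, j < 2) L (inord (i + 3)) (inord (j + 3)))
      * \det (\matrix_(i < 2, j < 2) L (inord (i + 5)) (inord (j + 5)))
      * L (inord 7) (inord 7)
      = \det L.
Proof.
move=> hL.
rewrite [RHS](@det_lblk _ 3 5); last first.
  apply/matrixP => i j; rewrite !mxE; apply: hL => /=; case: i => [i hi] /=; try lia.
  by rewrite hi.
rewrite -!mulrA; congr (_ * _).
  congr (\det _); apply/matrixP => i j; rewrite !mxE; congr (L _ _); apply/val_inj; rewrite /= inordK //.
  1,2: by apply: (leq_trans (ltn_ord _)).
rewrite [RHS](@det_lblk _ 2 3); last first.
  apply/matrixP => i j; rewrite !mxE; apply: hL => /=; case: i => [i hi] /=; try lia.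
  case: i hi => [|[|]] //.
congr (_ * _).
  congr (\det _); apply/matrixP => i j; rewrite !mxE; congr (L _ _); apply/val_inj; rewrite /= inordK //.
  1,3: by rewrite addnC.
  by case: i => [i hi] /=; lia.
  by case: j => [j hj] /=; lia.
rewrite [RHS](@det_lblk _ 2 1); last first.
  apply/matrixP => i j; rewrite !mxE; apply: hL => /=; case: i => [i hi] /=; try lia.
congr (_ * _).
  congr (\det _); apply/matrixP => i j; rewrite !mxE; congr (L _ _); apply/val_inj; rewrite /= inordK //.
  1,3: by rewrite addnC.
  by case: i => [i hi] /=; lia.
  by case: j => [j hj] /=; lia.
rewrite [drsubmx _]mx11_scalar det_scalar1 !mxE; congr (L _ _); apply/val_inj; rewrite /= inordK //.
Qed.

Lemma wedge_zero (R : realType) (a : 'rV[R]_8) k :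
  (forall j : 'I_8, (k <= j)%N -> a 0 j = 0) -> wedge1 a (vfirst k) = 0.
Proof.
move=> h; apply/ffunP => T; rewrite !ffunE; apply: big1 => j /andP[hj _].
by rewrite inE -leqNgt in hj; rewrite h // mulr0.
Qed.

Theorem lemma3p4 (R : realType) (al be al' be' : R) (L : 'M[R]_8) :
  L \in unitmx ->
  (forall i : 'I_8, F2 L (dm al' be' i) = d1 al be (F1 L i)) ->
  [/\ (forall i : 'I_8, (i < 3)%N -> wedge1 (F1 L i) (vfirst 3) = 0),
      (forall i : 'I_8, (3 <= i < 5)%N -> wedge1 (F1 L i) (vfirst 5) = 0),
      (forall i : 'I_8, (5 <= i < 7)%N -> wedge1 (F1 L i) (vfirst 7) = 0),
      (forall i j : 'I_8, (i < 7)%N ->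
          (j >= (if (i < 3)%N then 3 else if (i < 5)%N then 5 else 7))%N -> L i j = 0)
      &
      \det (\matrix_(i < 3, j < 3) L (inord i) (inord j))
      * \det (\matrix_(i < 2, j < 2) L (inord (i + 3)) (inord (j + 3)))
      * \det (\matrix_(i < 2, j < 2) L (inord (i + 5)) (inord (j + 5)))
      * L (inord 7) (inord 7)
      = \det L /\ \det L != 0].
Proof.
move=> hU hF.
have E i r c : F2 L (dm al' be' i) r c = d1 al be (F1 L i) r c by rewrite hF.
have FE i k : F1 L i 0 k = L i k by rewrite mxE.
have S1 : forall i j : 'I_8, (i < 3)%N -> (3 <= j)%N -> L i j = 0.
  move=> i j hi hj.
  have Z r c : d1 al be (F1 L i) r c = 0.
    rewrite -E; have -> : dm al' be' i = 0 by case: i hi => [[|[|[|k]]] hk].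
    by rewrite /F2 mulmx0 mul0mx mxE.
  rewrite -(inord_val j); case: j hj => [[|[|[|[|[|[|[|[|k]]]]]]]] hk] //= _; rewrite -FE.
  - by rewrite -(@d1_a3 _ al be _ (@Ordinal 8 0 isT) (@Ordinal 8 2 isT)).
  - by rewrite -(@d1_a4 _ al be _ (@Ordinal 8 1 isT) (@Ordinal 8 2 isT)).
  - by rewrite -(@d1_a5 _ al be _ (@Ordinal 8 0 isT) (@Ordinal 8 3 isT)).
  - by rewrite -(@d1_a6 _ al be _ (@Ordinal 8 0 isT) (@Ordinal 8 4 isT)).
  - by rewrite -(@d1_a7 _ al be _ (@Ordinal 8 0 isT) (@Ordinal 8 5 isT)).
have S2 : forall i j : 'I_8, (3 <= i < 5)%N -> (5 <= j)%N -> L i j = 0.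
  move=> i j hi hj.
  have Z c : (3 <= val c)%N -> d1 al be (F1 L i) (@Ordinal 8 0 isT) c = 0.
    move=> hc; rewrite -E; apply: (@F2_0 _ _ _ 3) => [q p hp|p hp].
      apply: dm_col; first by case/andP: hi => -> /ltn_trans ->.
      by case/andP: hi => _ ->.
    exact: S1.
  rewrite -(inord_val j); case: j hj => [[|[|[|[|[|[|[|[|k]]]]]]]] hk] //= _; rewrite -FE.
  - by rewrite -(@d1_a5 _ al be _ (@Ordinal 8 0 isT) (@Ordinal 8 3 isT)) // Z.
  - by rewrite -(@d1_a6 _ al be _ (@Ordinal 8 0 isT) (@Ordinal 8 4 isT)) // Z.
  - by rewrite -(@d1_a7 _ al be _ (@Ordinal 8 0 isT) (@Ordinal 8 5 isT)) // Z.
have S3 : forall i j : 'I_8, (5 <= i < 7)%N -> (7 <= j)%N -> L i j = 0.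
  move=> i j hi hj.
  have Z c : (5 <= val c)%N -> d1 al be (F1 L i) (@Ordinal 8 0 isT) c = 0.
    move=> hc; rewrite -E; apply: (@F2_0 _ _ _ 5) => [q p hp|p hp].
      apply: dm_col; first by case/andP: hi => /(leq_trans _) -> //.
      by case/andP: hi => h _; rewrite ltnNge h.
    case: (ltnP p 3) => h3; first by apply: S1 => //; apply: leq_trans hc.
    by apply: S2 => //; rewrite h3.
  rewrite -(inord_val j); case: j hj => [[|[|[|[|[|[|[|[|k]]]]]]]] hk] //= _; rewrite -FE.
  by rewrite -(@d1_a7 _ al be _ (@Ordinal 8 0 isT) (@Ordinal 8 5 isT)) // Z.
have S4 : forall i j : 'I_8, (i < 7)%N ->
    (j >= (if (i < 3)%N then 3 else if (i < 5)%N then 5 else 7))%N -> L i j = 0.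
  move=> i j hi; case: ifP => h3; first exact: S1.
  case: ifP => h5; first by apply: S2; rewrite h5 leqNgt h3.
  by apply: S3; rewrite hi leqNgt h5.
split.
- by move=> i hi; apply: wedge_zero => j hj; rewrite FE; apply: S1.
- by move=> i hi; apply: wedge_zero => j hj; rewrite FE; apply: S2.
- by move=> i hi; apply: wedge_zero => j hj; rewrite FE; apply: S3.
- exact: S4.
split; first exact: det_block.
by rewrite unitmxE unitfE in hU.
Qed.
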